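(* Let $n\geq 1$ and $k\geq 0$ be integers, let $0\leq i\leq n-1$ and $0\leq j\leq k$, and define \[ i'=\Big\lfloor \frac{(n+1)k-(k+1)i-j}{k+1}\Big\rfloor,\qquad j'=(n+1)k-(k+1)i-j-(k+1)i'. \] Then the map $\varphi$ (defined in the context) restricts to a bijection from $\Gamma^k(n,i;j)$ onto $\Gamma^k(n,i';j')$.
   Context: For a permutation $\pi=\pi_1\cdots\pi_n$ of $[n]=\{1,\dots,n\}$, $\mathrm{des}(\pi)$ is the number of $m\in[n-1]$ with $\pi_m>\pi_{m+1}$, and $\mathrm{maxdrop}(\pi)=\max\{m-\pi_m:1\leq m\leq n\}$. $A_{n,k}$ is the set of permutations of $[n]$ with $\mathrm{maxdrop}(\pi)\leq k$. For $0\le i\le n-1$ and $0\le j\le k$, $\Gamma^k(n,i;j)$ is the set of $\pi\in A_{n,k}$ with $\mathrm{des}(\pi)=i$ and $\pi_n=n-k+j$. For a permutation $\sigma$ of $[n-1]$ and $1\leq r\leq n$, $\sigma\leftarrow r$ is the permutation of $[n]$ obtained by increasing every entry of $\sigma$ that is $\geq r$ by $1$ and then appending $r$ at the end (e.g. $3421\leftarrow 3=45213$). The map $\varphi:A_{n,k}\to A_{n,k}$ (for fixed $k$, all $n\ge1$) is defined recursively: $\varphi(1)=1$; for $n\geq 2$ and $\pi\in A_{n,k}$, let $i=\mathrm{des}(\pi)$, $j=\pi_n-n+k$, let $i',j'$ be given by $i'=\lfloor((n+1)k-(k+1)i-j)/(k+1)\rfloor$ and $j'=(n+1)k-(k+1)i-j-(k+1)i'$,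 let $\pi'$ be the permutation of $[n-1]$ order-isomorphic to $\pi_1\cdots\pi_{n-1}$ (so $\pi=\pi'\leftarrow\pi_n$), and set $\varphi(\pi)=\varphi(\pi')\leftarrow(n-k+j')$. *)

(* Defs.v *)
From mathcomp Require Import all_boot all_order all_algebra.
Set Implicit Arguments. Unset Strict Implicit. Unset Printing Implicit Defensive.
Import Order.TTheory GRing.Theory Num.Theory.
Local Open Scope ring_scope.

(* Permutations of [n] = {1,...,n} are represented in one-line notation
   as sequences s = pi_1 ... pi_n of naturals (s`_0 = pi_1). *)

Definition is_permn (n : nat) (s : seq nat) : bool := perm_eq s (iota 1 n).

Definition des (s : seq nat) : nat :=
  (\sum_(m < (size s).-1) (nth 0 s m.+1 < nth 0 s m)%N)%N.

(* maxdrop(pi) = max_m (m - pi_m); computed with truncated subtraction,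
   which gives the same value since the true max is >= 0
   (at the position m of the entry 1, m - 1 >= 0). *)
Definition maxdrop (s : seq nat) : nat :=
  (\max_(m < size s) (m.+1 - nth 0 s m))%N.

Definition inA (n k : nat) (s : seq nat) : bool :=
  is_permn n s && (maxdrop s <= k)%N.

Definition Gamma (k n : nat) (i j : int) (s : seq nat) : bool :=
  [&& inA n k s, (des s)%:Z == i & ((last 0 s)%:Z == n%:Z - k%:Z + j)%R].

Definition iprime (n k : nat) (i j : int) : int :=
  (((n.+1 * k)%N%:Z - (k.+1)%:Z * i - j) %/ (k.+1)%:Z)%Z.
Definition jprime (n k : nat) (i j : int) : int :=
  ((n.+1 * k)%N%:Z - (k.+1)%:Z * i - j - (k.+1)%:Z * iprime n k i j)%R.

Definition insert_last (sigma : seq nat) (r : nat) : seq nat :=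
  rcons [seq (if (r <= x)%N then x.+1 else x) | x <- sigma] r.

(* the permutation of [n-1] order-isomorphic to pi_1 ... pi_(n-1) *)
Definition std_init (s : seq nat) : seq nat :=
  let r := last 0 s in
  [seq (if (r < x)%N then x.-1 else x) | x <- take (size s).-1 s].

Fixpoint phi_rec (k n : nat) (s : seq nat) : seq nat :=
  match n with
  | 0 => s
  | n'.+1 =>
      if (n' == 0)%N then s
      else
        let i := (des s)%:Z in
        let j := ((last 0 s)%:Z - n%:Z + k%:Z)%R in
        let j' := jprime n k i j in
        insert_last (phi_rec k n' (std_init s)) `|(n%:Z - k%:Z + j')%R|%N
  end.

Definition phi (k : nat) (s : seq nat) : seq nat := phi_rec k (size s) s.

(* Main.v *)
Require Import Defs.
From mathcomp Require Import all_boot all_order all_algebra zify.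
Import Order.TTheory GRing.Theory Num.Theory.
Set Implicit Arguments. Unset Strict Implicit. Unset Printing Implicit Defensive.

Lemma permnP n s : is_permn n s = [&& uniq s, size s == n & all (fun x => 0 < x <= n) s].
Proof.
apply/idP/idP.
- move=> H; rewrite /is_permn in H.
  rewrite (perm_uniq H) iota_uniq (perm_size H) size_iota eqxx /=.
  apply/allP => x xs; rewrite (perm_mem H) mem_iota in xs; lia.
- case/and3P => Us /eqP Ss /allP As; rewrite /is_permn.
  apply: uniq_perm => //; first exact: iota_uniq.
  have H1 : {subset s <= iota 1 n}.
    by move=> x xs; have := As x xs; rewrite mem_iota; lia.
  have H2 : size (iota 1 n) <= size s by rewrite size_iota Ss.
  by have [_ H] := uniq_min_size Us H1 H2.
Qed.

Lemma maxdrop_le k s : reflect (forall m, m < size s -> m.+1 <= nth 0 s m + k) (maxdrop s <= k).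
Proof.
rewrite /maxdrop; apply: (iffP (@bigmax_leqP _ xpredT k (fun m : 'I_(size s) => m.+1 - nth 0 s m))) => H m.
- move=> Hm; have := H (Ordinal Hm) isT; rewrite /=; lia.
- move=> _; have := H m (ltn_ord m); lia.
Qed.

Lemma des_rcons t x : des (rcons t x) = des t + ((0 < size t) && (x < last 0 t)).
Proof.
rewrite /des size_rcons /=.
case: t => [|a t]; first by rewrite !big_ord0.
rewrite [size (a :: t)]/= big_ord_recr /=; congr (_ + _).
- apply: eq_bigr => i _; rewrite !nth_rcons /= (ltn_ord i); congr (_ < _).
  case: i => [[|m] Hm] //=; rewrite nth_rcons.
  by have -> : m < size t by lia.
- rewrite nth_rcons ltnn eqxx -[a :: rcons t x]/(rcons (a::t) x) nth_rcons /= ltnS leqnn.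
  by rewrite -[X in nth _ _ X]/((size (a::t)).-1) nth_last.
Qed.

Definition gI r x := if r <= x then x.+1 else x.
Definition fI r x := if r < x then x.-1 else x.

Lemma gI_mono r a b : (gI r a < gI r b) = (a < b).
Proof. rewrite /gI; case: ifP; case: ifP => //; lia. Qed.

Lemma des_map_mono g t : (forall a b, (g a < g b) = (a < b)) -> des (map g t) = des t.
Proof.
move=> Hg; rewrite /des size_map; apply: eq_bigr => i _.
have Hi := ltn_ord i.
rewrite (nth_map 0) ?(nth_map 0) ?Hg //; lia.
Qed.

Lemma insert_lastE p r : insert_last p r = rcons (map (gI r) p) r.
Proof. by []. Qed.

Lemma size_insert p r : size (insert_last p r) = (size p).+1.
Proof. by rewrite insert_lastE size_rcons size_map. Qed.

Lemma last_insert p r : last 0 (insert_last p r) = r.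
Proof. by rewrite insert_lastE last_rcons. Qed.

Lemma std_rcons t r : std_init (rcons t r) = map (fI r) t.
Proof.
by rewrite /std_init last_rcons size_rcons /= -cats1 take_size_cat.
Qed.

Lemma std_insert p r : std_init (insert_last p r) = p.
Proof.
rewrite insert_lastE std_rcons -map_comp -[RHS]map_id; apply: eq_map => x /=.
rewrite /fI /gI; case: ifP; case: ifP => //; lia.
Qed.

Lemma des_insert p r : des (insert_last p r) = des p + ((0 < size p) && (r <= last 0 p)).
Proof.
rewrite insert_lastE des_rcons des_map_mono; last exact: gI_mono.
rewrite size_map; congr (_ + _); case/lastP: p => [|q y] //.
rewrite map_rcons !last_rcons /gI; case: ifP; lia.
Qed.

Lemma inA_insert n k p r : inA n k p -> 0 < r <= n.+1 -> n.+1 <= r + k ->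
  inA n.+1 k (insert_last p r).
Proof.
rewrite /inA !permnP => /andP[/and3P[Up /eqP Sp /allP Ap] /maxdrop_le Mp] Hr Hk.
apply/andP; split.
- apply/and3P; split.
  + rewrite insert_lastE rcons_uniq map_inj_uniq ?Up ?andbT.
      apply/mapP => -[x _ Ex]; move: Ex; rewrite /gI; case: ifP; lia.
    move=> a b; rewrite /gI; case: ifP; case: ifP; lia.
  + by rewrite size_insert Sp.
  + apply/allP => x; rewrite insert_lastE mem_rcons inE => /orP[/eqP->|/mapP[y yp ->]].
      lia.
    have := Ap y yp; rewrite /gI; case: ifP; lia.
- apply/maxdrop_le => m; rewrite size_insert insert_lastE nth_rcons size_map Sp => Hm.
  case: ifP => Hmn.
    rewrite (nth_map 0) ?Sp //; have := Mp m; rewrite Sp => /(_ Hmn).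
    rewrite /gI; case: ifP; lia.
  have -> : (m == n) = true by apply/eqP; lia.
  lia.
Qed.

Lemma inA_decomp n k s : inA n.+1 k s ->
  [/\ s = insert_last (std_init s) (last 0 s), inA n k (std_init s),
      0 < last 0 s <= n.+1 & n.+1 <= last 0 s + k].
Proof.
case/lastP: s => [|t r]; first by case/andP; rewrite permnP => /and3P[_ /eqP].
rewrite /inA !permnP last_rcons std_rcons => /andP[/and3P[U /eqP S /allP A] /maxdrop_le M].
rewrite size_rcons in S; case: S => St.
rewrite rcons_uniq in U; case/andP: U => rt Ut.
have Ar : 0 < r <= n.+1 by apply: A; rewrite mem_rcons inE eqxx.
have Mr : n.+1 <= r + k.
  by have := M n; rewrite size_rcons St nth_rcons St ltnn eqxx => /(_ (ltnSn n)).
have ne x : x \in t -> x != r by move=> xt; apply: contraNneq rt => <-.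
have At x : x \in t -> 0 < x <= n.+1 by move=> xt; apply: A; rewrite mem_rcons inE xt orbT.
split => //.
- rewrite insert_lastE -map_comp; congr rcons.
  transitivity (map id t); first by rewrite map_id.
  apply/eq_in_map => x xt /=; have := ne x xt; have := At x xt.
  rewrite /fI /gI; case: ifP; case: ifP; lia.
- apply/andP; split.
  + apply/and3P; split.
    * rewrite map_inj_in_uniq // => a b ha hb; have := ne a ha; have := ne b hb.
      rewrite /fI; case: ifP; case: ifP; lia.
    * by rewrite size_map St.
    * apply/allP => x /mapP[y yt ->]; have := ne y yt; have := At y yt.
      rewrite /fI; case: ifP; lia.
  + apply/maxdrop_le => m; rewrite size_map St => Hm.
    rewrite (nth_map 0) ?St //.
    have yt : nth 0 t m \in t by rewrite mem_nth ?St.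
    have := ne _ yt; have := At _ yt.
    have Hm' : m < n.+1 by lia.
    have := M m; rewrite size_rcons St nth_rcons St Hm => /(_ Hm').
    rewrite /fI; case: ifP; lia.
Qed.

Section Arith.
Local Open Scope ring_scope.

Lemma zero_mult (x K : int) : 0 < K -> - K < x * K -> x * K < K -> x = 0.
Proof. nia. Qed.

Lemma jp_def n k i j : (n.+1 * k)%N%:Z - k.+1%:Z * i - j = k.+1%:Z * iprime n k i j + jprime n k i j.
Proof. rewrite /jprime; lia. Qed.

Lemma jp_range n k i j : 0 <= jprime n k i j <= k%:Z.
Proof.
set N := (n.+1 * k)%N%:Z - k.+1%:Z * i - j.
have E := divz_eq N k.+1%:Z.
have H0 := @modz_ge0 N k.+1%:Z isT.
have H1 := @ltz_mod N k.+1%:Z isT.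
rewrite /jprime /iprime -/N; rewrite /= in H1. lia.
Qed.

Lemma ip_unique n k i j q r : (n.+1 * k)%N%:Z - k.+1%:Z * i - j = k.+1%:Z * q + r ->
  0 <= r <= k%:Z -> iprime n k i j = q /\ jprime n k i j = r.
Proof.
move=> E R; have E1 := jp_def n k i j; have R1 := jp_range n k i j.
have Z := zero_mult (x := iprime n k i j - q) (K := k.+1%:Z).
have Hq : iprime n k i j - q = 0 by apply: Z; lia.
lia.
Qed.

Lemma ip_invol n k i j : 0 <= j <= k%:Z ->
  iprime n k (iprime n k i j) (jprime n k i j) = i /\
  jprime n k (iprime n k i j) (jprime n k i j) = j.
Proof.
move=> Hj; apply: ip_unique => //; have := jp_def n k i j; lia.
Qed.

Lemma arithC (k N N0 ip jp ip0 jp0 j j0 : int) :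
 0 <= k -> 0 <= j <= k -> 0 <= j0 <= k ->
 N = N0 + k - (k+1) * (j < j0)%R%:Z + j0 - j -> N = (k+1)*ip + jp -> N0 = (k+1)*ip0 + jp0 ->
 0 <= jp <= k -> 0 <= jp0 <= k ->
 ip = ip0 + (jp < jp0)%R%:Z.
Proof.
move=> Hk Hj Hj0 EN E E0 R R0.
have Z := zero_mult (x := ip - ip0 - (jp < jp0)%R%:Z) (K := k + 1).
move: EN Z; case: ltrP => h1; case: ltrP => h2 /= EN Z.
all: have := Z ltac:(lia) ltac:(lia) ltac:(lia); lia.
Qed.

Lemma jp_lower n k i j : 0 <= j <= k%:Z -> k%:Z + 1 - n%:Z <= j ->
  k%:Z + 1 - n%:Z <= jprime n k i j.
Proof.
move=> Hj Hl; have E := jp_def n k i j; have R := jp_range n k i j.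
rewrite leNgt; apply/negP => Hc.
have Z := zero_mult (x := n%:Z - iprime n k i j - i) (K := k.+1%:Z).
have := Z ltac:(lia) ltac:(lia) ltac:(lia); lia.
Qed.
End Arith.

Local Open Scope ring_scope.

Lemma size_inA n k s : inA n k s -> size s = n.
Proof. by case/andP; rewrite permnP => /and3P[_ /eqP]. Qed.

Lemma size_std s : size (std_init s) = (size s).-1.
Proof. by rewrite /std_init size_map size_takel // leq_pred. Qed.

Lemma phi_step k n s : size s = n.+2 ->
  phi k s = insert_last (phi k (std_init s))
    `|(n.+2%:Z - k%:Z + jprime n.+2 k (des s)%:Z ((last 0%N s)%:Z - n.+2%:Z + k%:Z))%R|%N.
Proof. by move=> Hs; rewrite /phi size_std Hs. Qed.

Lemma main k n s : inA n.+1 k s ->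
  [/\ inA n.+1 k (phi k s),
      (des (phi k s))%:Z = iprime n.+1 k (des s)%:Z ((last 0%N s)%:Z - n.+1%:Z + k%:Z)%R,
      (last 0%N (phi k s))%:Z = (n.+1%:Z - k%:Z + jprime n.+1 k (des s)%:Z ((last 0%N s)%:Z - n.+1%:Z + k%:Z))%R
    & phi k (phi k s) = s].
Proof.
elim: n s => [|n IH] s.
- move=> As; have [Es Ap Hr Hk] := inA_decomp As.
  have Sp := size_inA Ap; move: Sp Es Hr Hk.
  case: (std_init s) => // _ Es Hr Hk.
  have Er : last 0%N s = 1%N by lia.
  rewrite Er in Es; rewrite Es.
  have -> : phi k (insert_last [::] 1) = [:: 1] by [].
  have D1 : des [:: 1%N] = 0%N by rewrite /des /= big_ord0.
  rewrite D1.
  have [-> ->] := @ip_unique 1 k 0 (1%:Z - 1%:Z + k%:Z)%R 0 k ltac:(lia) ltac:(lia).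
  split => //; [by move: As; rewrite Es | by rewrite /= subrK].
- move=> As; have [Es Ap Hr Hk] := inA_decomp As.
  have Ss : size s = n.+2 := size_inA As.
  have [p pE] : exists p, p = std_init s by eexists.
  have [r rE] : exists r, r = last 0%N s by eexists.
  rewrite -pE -rE in Es Ap Hr Hk.
  have [As' Ds' Ls' Is'] := IH p Ap.
  have [σ σE] : exists σ, σ = phi k p by eexists.
  rewrite -σE in As' Ds' Ls' Is'.
  have Sp : size p = n.+1 := size_inA Ap.
  have Sσ : size σ = n.+1 := size_inA As'.
  have Ds : des s = (des p + ((0 < size p) && (r <= last 0%N p)))%N by rewrite {1}Es des_insert.
  rewrite Sp /= in Ds.
  have [j jE] : exists j, j = (r%:Z - n.+2%:Z + k%:Z)%R by eexists.
  have [j0 j0E] : exists j0, j0 = ((last 0%N p)%:Z - n.+1%:Z + k%:Z)%R by eexists.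
  rewrite -j0E in Ds' Ls'.
  have Hp : (0 < last 0%N p <= n.+1)%N /\ (n.+1 <= last 0%N p + k)%N.
    by have [_ _ ? ?] := inA_decomp Ap.
  have Hj : 0 <= j <= k%:Z by lia.
  have Hj0 : 0 <= j0 <= k%:Z by lia.
  have Hjl : k%:Z + 1 - n.+2%:Z <= j by lia.
  have [jp jpE] : exists jp, jp = jprime n.+2 k (des s)%:Z j by eexists.
  have [ip ipE] : exists ip, ip = iprime n.+2 k (des s)%:Z j by eexists.
  have [jp0 jp0E] : exists jp0, jp0 = jprime n.+1 k (des p)%:Z j0 by eexists.
  have [ip0 ip0E] : exists ip0, ip0 = iprime n.+1 k (des p)%:Z j0 by eexists.
  rewrite -ip0E -jp0E in Ds' Ls'.
  have Rjp : 0 <= jp <= k%:Z by rewrite jpE; apply: jp_range.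
  have Ljp : k%:Z + 1 - n.+2%:Z <= jp by rewrite jpE; apply: jp_lower.
  have Rjp0 : 0 <= jp0 <= k%:Z by rewrite jp0E; apply: jp_range.
  have E1 := jp_def n.+2 k (des s)%:Z j; rewrite -ipE -jpE in E1.
  have E0 := jp_def n.+1 k (des p)%:Z j0; rewrite -ip0E -jp0E in E0.
  have Eb : (r <= last 0%N p)%N = (j < j0)%R by apply/idP/idP; lia.
  rewrite Eb in Ds.
  have Hip : ip = ip0 + (jp < jp0)%R%:Z.
    apply: (@arithC k%:Z ((n.+3 * k)%N%:Z - k.+1%:Z * (des s)%:Z - j)
                        ((n.+2 * k)%N%:Z - k.+1%:Z * (des p)%:Z - j0) ip jp ip0 jp0 j j0) => //;
      try lia.
  rewrite (phi_step k Ss) -pE -rE -jE -jpE -σE.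
  have [r' r'E] : exists r', r' = `|(n.+2%:Z - k%:Z + jp)%R|%N by eexists.
  rewrite -r'E.
  have Er' : r'%:Z = (n.+2%:Z - k%:Z + jp)%R by rewrite r'E; lia.
  have Hr' : (0 < r' <= n.+2)%N /\ (n.+2 <= r' + k)%N by lia.
  have Eb' : (r' <= last 0%N σ)%N = (jp < jp0)%R by apply/idP/idP; lia.
  have Dphi : (des (insert_last σ r'))%:Z = ip.
    by rewrite des_insert Sσ /= Eb' PoszD Ds' Hip.
  have Lphi : (last 0%N (insert_last σ r'))%:Z = (n.+2%:Z - k%:Z + jp)%R.
    by rewrite last_insert.
  split.
  + apply: inA_insert => //; lia.
  + by rewrite Dphi ipE.
  + by rewrite Lphi jpE.
  + rewrite (phi_step k (n := n)); last by rewrite size_insert Sσ.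
    rewrite std_insert Is' Dphi Lphi.
    have -> : ((n.+2%:Z - k%:Z + jp)%R - n.+2%:Z + k%:Z)%R = jp by lia.
    have [_ Hinv] := ip_invol n.+2 (des s)%:Z Hj.
    rewrite -ipE -jpE in Hinv; rewrite Hinv.
    have -> : `|(n.+2%:Z - k%:Z + j)%R|%N = r by lia.
    by rewrite [RHS]Es.
Qed.

Theorem theorem2p1 (n k i j : nat) :
  (1 <= n)%N -> (i <= n - 1)%N -> (j <= k)%N ->
  let i' := iprime n k i%:Z j%:Z in
  let j' := jprime n k i%:Z j%:Z in
  [/\ (forall s, Gamma k n i%:Z j%:Z s -> Gamma k n i' j' (phi k s)),
      {in Gamma k n i%:Z j%:Z &, injective (phi k)}
    & (forall t, Gamma k n i' j' t ->
         exists2 s, Gamma k n i%:Z j%:Z s & phi k s = t)].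
Proof.
move=> Hn Hi Hj i' j'; rewrite /i' /j'; clear i' j'.
case: n Hn Hi => [//|n] _ Hi.
have L0 : forall t : seq nat, last (0%R : nat) t = last 0%N t by [].
have fwd : forall s, Gamma k n.+1 i%:Z j%:Z s ->
    [/\ inA n.+1 k s, (des s)%:Z = i%:Z & ((last 0%N s)%:Z - n.+1%:Z + k%:Z)%R = j%:Z].
  move=> s /and3P[As /eqP Ds /eqP Ls]; rewrite L0 in Ls; split => //; lia.
split.
- move=> s /fwd[As Ds Js]; have [A1 D1 L1 _] := main As.
  apply/and3P; split => //; apply/eqP; first by rewrite D1 Ds Js.
  by rewrite L0 L1 Ds Js.
- move=> s1 s2 /fwd[A1 _ _] /fwd[A2 _ _] E.
  have [_ _ _ I1] := main A1; have [_ _ _ I2] := main A2.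
  by rewrite -I1 E I2.
- move=> t /and3P[At /eqP Dt /eqP Lt]; rewrite L0 in Lt.
  have [A1 D1 L1 I1] := main At.
  exists (phi k t) => //.
  have Jt : ((last 0%N t)%:Z - n.+1%:Z + k%:Z)%R = jprime n.+1 k i%:Z j%:Z by lia.
  have Hj' : (0 <= j%:Z <= k%:Z)%R by lia.
  have [Ii Jj] := ip_invol n.+1 i%:Z Hj'.
  apply/and3P; split => //; apply/eqP; first by rewrite D1 Dt Jt Ii.
  by rewrite L0 L1 Dt Jt Jj.
Qed.
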